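(* Let $N\ge3$ and let $([v_{ij}:v_{ji}])_{1\le i<j\le N}$ be common lines data such that every triple $(i,j,k)$ of distinct indices strictly satisfies the spherical triangle inequalities, and such that $L_{ijk,ijm}=0$ for all pairwise distinct indices $i,j,k,m$. Then there exist generic frames $F_1,\dots,F_N$ realizing the data, i.e. with $\iota_i(v_{ij})=\iota_j(v_{ji})$ for all $i\neq j$, and they are unique up to the diagonal action of $\mathrm O(3)$.
   Context: A frame is an ordered pair $(a,b)$ of orthonormal vectors in $\mathbb R^3$. Planes $P_1=\dots=P_N=\mathbb R^2$; a frame $F_i=(a_i,b_i)$ gives the embedding $\iota_i:P_i\to\mathbb R^3$, $\iota_i(x,y)=xa_i+yb_i$. Frames $F_1,\dots,F_N$ are generic if the planes $\iota_i(P_i)$ are pairwise distinct and the lines $\iota_i(P_i)\cap\iota_j(P_j)$, $i<j$, are pairwise distinct. $\mathrm O(3)$ is the group of all $3\times3$ orthogonal matrices, acting by $A\cdot(F_1,\dots,F_N)=(AF_1,\dots,AF_N)$, $A(a,b)=(Aa,Ab)$. Common lines data is a collection $([v_{ij}:v_{ji}])_{1\le i<j\le N}$ of elements of $\mathbb P(P_i\times P_j)$ (nonzero pairs $(v_{ij},v_{ji})\in\mathbb R^2\times\mathbb R^2$ up to nonzero scaling) with $\|v_{ij}\|^2=\|v_{ji}\|^2$; indices of a pair may be written in either order. For a triple and representatives, $\alpha_{ijk}=\cos^{-1}\frac{v_{ij}\cdot v_{ik}}{\|v_{ij}\|\|v_{ik}\|}$, $\beta_{ijk}=\cos^{-1}\frac{v_{ji}\cdot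 v_{jk}}{\|v_{ji}\|\|v_{jk}\|}$, $\gamma_{ijk}=\cos^{-1}\frac{v_{ki}\cdot v_{kj}}{\|v_{ki}\|\|v_{kj}\|}$; the triple strictly satisfies the spherical triangle inequalities if for any representatives $\beta+\gamma>\alpha$, $\alpha+\gamma>\beta$, $\alpha+\beta>\gamma$, $\alpha+\beta+\gamma<2\pi$. For pairwise distinct $i,j,k,m$ and unit-norm representatives, $L_{ijk,ijm}=\big(v_{ki}\cdot v_{kj}-(v_{ij}\cdot v_{ik})(v_{ji}\cdot v_{jk})\big)|\det[v_{ij},v_{im}]\det[v_{ji},v_{jm}]|-\sigma\big(v_{mi}\cdot v_{mj}-(v_{ij}\cdot v_{im})(v_{ji}\cdot v_{jm})\big)|\det[v_{ij},v_{ik}]\det[v_{ji},v_{jk}]|$ with $\sigma=\operatorname{sign}(\det[v_{ij},v_{ik}]\det[v_{ij},v_{im}]\det[v_{ji},v_{jk}]\det[v_{ji},v_{jm}])$, where $\det[u,w]$ is the $2\times2$ determinant with columns $u,w$. *)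

(* Defs.v *)
From HB Require Import structures.
From mathcomp Require Import all_boot all_order all_algebra.
From mathcomp Require Import reals trigo.
Set Implicit Arguments. Unset Strict Implicit. Unset Printing Implicit Defensive.
Import Order.TTheory GRing.Theory Num.Theory.
Local Open Scope ring_scope.

Section CommonLines.
Variable R : realType.

(* Vectors of P_i = R^2 are row vectors 'rV_2. *)
Definition dot2 (u w : 'rV[R]_2) : R := u 0 0 * w 0 0 + u 0 1 * w 0 1.
Definition norm2 (u : 'rV[R]_2) : R := Num.sqrt (dot2 u u).
Definition det2 (u w : 'rV[R]_2) : R := u 0 0 * w 0 1 - w 0 0 * u 0 1.
Definition angle2 (u w : 'rV[R]_2) : R := acos (dot2 u w / (norm2 u * norm2 w)).

(* A frame (a,b) is the 2x3 matrix with rows a, b; it is a frame iff its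
   rows are orthonormal.  iota(x,y) = x a + y b is  v *m F. *)
Definition is_frame (F : 'M[R]_(2,3)) : Prop := F *m F^T = 1%:M.
Definition iota (F : 'M[R]_(2,3)) (v : 'rV[R]_2) : 'rV[R]_3 := v *m F.

(* O(3) acting on R^3; on row vectors x |-> A x reads x |-> x *m A^T. *)
Definition is_orthogonal3 (A : 'M[R]_3) : Prop := A^T *m A = 1%:M.
Definition act (A : 'M[R]_3) (F : 'M[R]_(2,3)) : 'M[R]_(2,3) := F *m A^T.

Variable N : nat.

(* the image plane iota_i(P_i) is the row space of F i *)
Definition generic (F : 'I_N -> 'M[R]_(2,3)) : Prop :=
  (forall i j, i != j -> ~~ (F i == F j)%MS) /\
  (forall i j k l, i != j -> k != l ->
     ~ ((i = k /\ j = l) \/ (i = l /\ j = k)) ->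
     ~~ ((F i :&: F j) == (F k :&: F l))%MS).

(* Common lines data, given by representatives (v i j, v j i) of
   [v_ij : v_ji] for i <> j (v i i is irrelevant). *)
Definition common_lines_data (v : 'I_N -> 'I_N -> 'rV[R]_2) : Prop :=
  forall i j, i != j ->
    (v i j != 0 \/ v j i != 0) /\ dot2 (v i j) (v i j) = dot2 (v j i) (v j i).

Definition realizes (F : 'I_N -> 'M[R]_(2,3)) (v : 'I_N -> 'I_N -> 'rV[R]_2)
  : Prop := forall i j, i != j -> iota (F i) (v i j) = iota (F j) (v j i).

(* spherical triangle inequalities (strict) for given representatives *)
Definition strict_STI_reps (w : 'I_N -> 'I_N -> 'rV[R]_2) (i j k : 'I_N)
  : Prop :=
  let a := angle2 (w i j) (w i k) in
  let b := angle2 (w j i) (w j k) in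
  let c := angle2 (w k i) (w k j) in
  [/\ b + c > a, a + c > b, a + b > c & a + b + c < 2 * pi].

(* ... for ANY representatives: rescale each pair {i,j} by a nonzero
   scalar c i j = c j i. *)
Definition strict_STI (v : 'I_N -> 'I_N -> 'rV[R]_2) (i j k : 'I_N) : Prop :=
  forall c : 'I_N -> 'I_N -> R,
    (forall p q, c p q = c q p) -> (forall p q, c p q != 0) ->
    strict_STI_reps (fun p q => c p q *: v p q) i j k.

Definition L (v : 'I_N -> 'I_N -> 'rV[R]_2) (i j k m : 'I_N) : R :=
  let u := fun p q => (norm2 (v p q))^-1 *: v p q in
  let sigma := Num.sg (det2 (u i j) (u i k) * det2 (u i j) (u i m)
                       * det2 (u j i) (u j k) * det2 (u j i) (u j m)) in
  (dot2 (u k i) (u k j) - dot2 (u i j) (u i k) * dot2 (u j i) (u j k))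
    * `|det2 (u i j) (u i m) * det2 (u j i) (u j m)|
  - sigma * (dot2 (u m i) (u m j) - dot2 (u i j) (u i m) * dot2 (u j i) (u j m))
    * `|det2 (u i j) (u i k) * det2 (u j i) (u j k)|.

End CommonLines.

(* Main.v *)
Require Import Defs.
From HB Require Import structures.
From mathcomp Require Import all_boot all_order all_algebra.
From mathcomp Require Import reals trigo.
From mathcomp Require Import ring lra.
Import Order.TTheory GRing.Theory Num.Theory.
Local Open Scope ring_scope.

Section Trig.
Variable R : realType.

Lemma trig_core (a b c a' b' : R) :
  a ^+ 2 + a' ^+ 2 = 1 -> b ^+ 2 + b' ^+ 2 = 1 -> -1 <= c <= 1 ->
  acos b + acos c > acos a -> acos a + acos c > acos b ->
  acos a + acos b > acos c -> acos a + acos b + acos c < 2 * pi ->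
  a' != 0 /\ (c - a * b) ^+ 2 < (a' * b') ^+ 2.
Proof.
move=> ha hb hc h1 h2 h3 h4.
have ha1 : -1 <= a <= 1.
  by apply/andP; split; nra.
have hb1 : -1 <= b <= 1 by apply/andP; split; nra.
have [A0 Api] := (acos_ge0 ha1, acos_lepi ha1).
have [B0 Bpi] := (acos_ge0 hb1, acos_lepi hb1).
have [C0 Cpi] := (acos_ge0 hc, acos_lepi hc).
have ca : cos (acos a) = a by apply: acosK; rewrite in_itv.
have cb : cos (acos b) = b by apply: acosK; rewrite in_itv.
have cc : cos (acos c) = c by apply: acosK; rewrite in_itv.
have sa := sin_acos ha1; have sb := sin_acos hb1.
split.
  apply/eqP => a'0.
  have : a ^+ 2 = 1 by rewrite -ha a'0; ring.
  move/eqP; rewrite sqrf_eq1 => /orP[] /eqP ae.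
    move: h2 h3; rewrite ae acos1; lra.
  move: h1 h4; rewrite ae acosN1; lra.
set S := Num.sqrt (1 - a ^+ 2) * Num.sqrt (1 - b ^+ 2).
have S0 : 0 <= S by rewrite mulr_ge0 ?sqrtr_ge0.
have S2 : S ^+ 2 = (a' * b') ^+ 2.
  have e1 : 1 - a ^+ 2 = a' ^+ 2 by lra.
  have e2 : 1 - b ^+ 2 = b' ^+ 2 by lra.
  by rewrite /S e1 e2 !sqrtr_sqr exprMn !real_normK ?num_real // exprMn.
have up : c < a * b + S.
  have : cos (acos c) < cos `|acos a - acos b|.
    rewrite ltr_cos; first by apply/ltr_normlP; split; lra.
      by rewrite in_itv /= normr_ge0 /=; apply/ler_normlP; split; lra.
    by rewrite in_itv /= C0 Cpi.
  by rewrite cos_norm cosB ca cb cc sa sb.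
have lo : a * b - S < c.
  have -> : a * b - S = cos (acos a + acos b) by rewrite cosD ca cb sa sb.
  case: (lerP (acos a + acos b) pi) => hab.
    rewrite -cc ltr_cos ?in_itv /= ?C0 ?Cpi //.
    by rewrite hab andbT addr_ge0.
  have -> : cos (acos a + acos b) = cos (pi *+ 2 - (acos a + acos b)).
    by rewrite [pi *+ 2 - _]addrC cosD2pi cosN.
  have h5 : acos a + acos b + acos c < pi + pi by move: h4; rewrite mulrDl mul1r.
  rewrite -cc ltr_cos ?in_itv /= ?C0 ?Cpi //= ?mulr2n; try lra.
rewrite -S2.
have h : `|c - a * b| < S by apply/ltr_normlP; split; lra.
rewrite -real_normK ?num_real //.
by rewrite ltr_pXn2r // ?nnegrE ?normr_ge0.
Qed.
End Trig.

Section Vec.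
Variable R : realType.

Record V := mkV { vx : R; vy : R; vz : R }.
Definition addV a b := mkV (vx a + vx b) (vy a + vy b) (vz a + vz b).
Definition sclV (k : R) a := mkV (k * vx a) (k * vy a) (k * vz a).
Definition dotV a b := vx a * vx b + vy a * vy b + vz a * vz b.
Definition crossV a b := mkV (vy a * vz b - vz a * vy b)
  (vz a * vx b - vx a * vz b) (vx a * vy b - vy a * vx b).

Lemma eqV a b : vx a = vx b -> vy a = vy b -> vz a = vz b -> a = b.
Proof. by case: a; case: b => /= ? ? ? ? ? ? -> -> ->. Qed.

Ltac vring := apply: eqV; rewrite /addV /sclV /crossV /=; ring.
Ltac vfield := apply: eqV; rewrite /addV /sclV /crossV /=; field.

Definition Fr := (V * V)%type.
Definition isfr (F : Fr) := [/\ dotV F.1 F.1 = 1, dotV F.2 F.2 = 1 & dotV F.1 F.2 = 0].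
Definition nF (F : Fr) := crossV F.1 F.2.
Definition embc (F : Fr) (x0 x1 : R) := addV (sclV x0 F.1) (sclV x1 F.2).
Definition emb (F : Fr) (w : 'rV[R]_2) := embc F (w 0 0) (w 0 1).

Lemma emb_dot F x0 x1 y0 y1 : isfr F ->
  dotV (embc F x0 x1) (embc F y0 y1) = x0 * y0 + x1 * y1.
Proof.
case=> h1 h2 h3.
have -> : dotV (embc F x0 x1) (embc F y0 y1) =
  x0 * y0 * dotV F.1 F.1 + (x0 * y1 + x1 * y0) * dotV F.1 F.2
  + x1 * y1 * dotV F.2 F.2 by rewrite /dotV /embc /addV /sclV /=; ring.
by rewrite h1 h2 h3; ring.
Qed.

Lemma emb_n F x0 x1 : dotV (embc F x0 x1) (nF F) = 0.
Proof. by rewrite /dotV /embc /nF /addV /sclV /crossV /=; ring. Qed.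

Lemma n_emb F x0 x1 : dotV (nF F) (embc F x0 x1) = 0.
Proof. by rewrite /dotV /embc /nF /addV /sclV /crossV /=; ring. Qed.

Lemma n_cross F x0 x1 : isfr F ->
  crossV (nF F) (embc F x0 x1) = embc F (- x1) x0.
Proof.
case=> h1 h2 h3.
have -> : crossV (nF F) (embc F x0 x1) =
  embc F (- x0 * dotV F.1 F.2 - x1 * dotV F.2 F.2)
         (x0 * dotV F.1 F.1 + x1 * dotV F.1 F.2).
  by rewrite /dotV /embc /nF; vring.
by rewrite h1 h2 h3; congr embc; ring.
Qed.

Lemma embcD F x0 x1 y0 y1 k l :
  embc F (k * x0 + l * y0) (k * x1 + l * y1) =
  addV (sclV k (embc F x0 x1)) (sclV l (embc F y0 y1)).
Proof. rewrite /embc; vring. Qed.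

Lemma lagrangeV a b c d :
  dotV (crossV a b) (crossV c d) = dotV a c * dotV b d - dotV a d * dotV b c.
Proof. by rewrite /dotV /crossV /=; ring. Qed.

Lemma dot_cross_l a b : dotV a (crossV b a) = 0.
Proof. by rewrite /dotV /crossV /=; ring. Qed.
Lemma dot_cross_r a b : dotV (crossV a b) a = 0.
Proof. by rewrite /dotV /crossV /=; ring. Qed.
Lemma dot_cross_r2 a b : dotV (crossV a b) b = 0.
Proof. by rewrite /dotV /crossV /=; ring. Qed.
Lemma dotC a b : dotV a b = dotV b a.
Proof. by rewrite /dotV; ring. Qed.

Lemma expand F w : isfr F ->
  w = addV (addV (sclV (dotV w F.1) F.1) (sclV (dotV w F.2) F.2))
           (sclV (dotV w (nF F)) (nF F)).
Proof.
move=> [h1 h2 h3].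
have nn : dotV (nF F) (nF F) = 1 by rewrite lagrangeV h1 h2 h3 dotC h3; ring.
have E : sclV (dotV (nF F) (nF F)) w =
  addV (addV (sclV (dotV F.2 F.2 * dotV w F.1 - dotV F.1 F.2 * dotV w F.2) F.1)
             (sclV (dotV F.1 F.1 * dotV w F.2 - dotV F.1 F.2 * dotV w F.1) F.2))
       (sclV (dotV w (nF F)) (nF F)).
  by rewrite /dotV /nF; vring.
move: E; rewrite nn h1 h2 h3 => E.
transitivity (sclV 1 w); first by apply: eqV; rewrite /= mul1r.
by rewrite E; congr (addV (addV (sclV _ _) (sclV _ _)) _); ring.
Qed.

Lemma nn1 F : isfr F -> dotV (nF F) (nF F) = 1.
Proof. by case=> h1 h2 h3; rewrite lagrangeV h1 h2 h3 dotC h3; ring. Qed.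

Lemma perp_n F w : isfr F -> dotV w w = 1 -> dotV w F.1 = 0 -> dotV w F.2 = 0 ->
  dotV w (nF F) ^+ 2 = 1.
Proof.
move=> HF hw h1 h2; have E := @expand F w HF.
rewrite h1 h2 in E; set c := dotV w (nF F) in E *.
rewrite -hw E.
transitivity (c ^+ 2 * dotV (nF F) (nF F)); first by rewrite nn1 // mulr1.
by rewrite /dotV /addV /sclV /=; ring.
Qed.

Lemma det_frame (H H' : Fr) (p q : 'rV[R]_2) : det2 p q != 0 ->
  emb H p = emb H' p -> emb H q = emb H' q -> H = H'.
Proof.
move=> hd e1 e2.
have k1 : forall G : Fr, G.1 = sclV (det2 p q)^-1
   (addV (sclV (q 0 1) (emb G p)) (sclV (- p 0 1) (emb G q))).
  by move=> G; move: hd; rewrite /emb /embc /det2 => hd; vfield.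
have k2 : forall G : Fr, G.2 = sclV (det2 p q)^-1
   (addV (sclV (- q 0 0) (emb G p)) (sclV (p 0 0) (emb G q))).
  by move=> G; move: hd; rewrite /emb /embc /det2 => hd; vfield.
case: H e1 e2 k1 k2 => a b; case: H' => a' b' e1 e2 k1 k2.
have ea := k1 (a, b); have ea' := k1 (a', b').
have eb := k2 (a, b); have eb' := k2 (a', b').
rewrite /= in ea ea' eb eb'.
congr pair; first by rewrite ea ea' e1 e2.
by rewrite eb eb' e1 e2.
Qed.

Definition Jv (p : 'rV[R]_2) F := embc F (- p 0 1) (p 0 0).

Lemma emb_decomp F (p w : 'rV[R]_2) : dot2 p p = 1 ->
  emb F w = addV (sclV (dot2 p w) (emb F p)) (sclV (det2 p w) (Jv p F)).
Proof.
move=> hp; transitivity (embc F (w 0 0 * dot2 p p) (w 0 1 * dot2 p p)).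
  by rewrite hp !mulr1.
by rewrite /dot2 /det2 /emb /Jv /embc; vring.
Qed.

Lemma Jv_cross F p : isfr F -> Jv p F = crossV (nF F) (emb F p).
Proof. by move=> HF; rewrite /Jv /emb n_cross. Qed.

Lemma unit_emb F p : isfr F -> dot2 p p = 1 -> dotV (emb F p) (emb F p) = 1.
Proof. by move=> HF hp; rewrite /emb emb_dot // -hp. Qed.

Lemma emb_dot2 F p q : isfr F -> dotV (emb F p) (emb F q) = dot2 p q.
Proof. by move=> HF; rewrite /emb emb_dot. Qed.

Lemma core_dot Fi Fj (p q w w' : 'rV[R]_2) : isfr Fi -> isfr Fj ->
  dot2 p p = 1 -> dot2 q q = 1 -> emb Fi p = emb Fj q ->
  dotV (emb Fi w) (emb Fj w') =
  dot2 p w * dot2 q w' + det2 p w * det2 q w' * dotV (nF Fi) (nF Fj).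
Proof.
move=> Hi Hj hp hq hx.
rewrite (emb_decomp Fi p w hp) (emb_decomp Fj q w' hq) !Jv_cross // -hx.
set x := emb Fi p.
have xx : dotV x x = 1 by exact: unit_emb.
have xi : dotV (nF Fi) x = 0 by rewrite /x /emb n_emb.
have xj : dotV x (nF Fj) = 0 by rewrite /x hx /emb emb_n.
set a := dot2 p w; set b := det2 p w; set c := dot2 q w'; set d := det2 q w'.
have -> : dotV (addV (sclV a x) (sclV b (crossV (nF Fi) x)))
    (addV (sclV c x) (sclV d (crossV (nF Fj) x))) =
  a * c * dotV x x + a * d * dotV x (crossV (nF Fj) x)
  + b * c * dotV (crossV (nF Fi) x) x
  + b * d * (dotV (nF Fi) (nF Fj) * dotV x x - dotV (nF Fi) x * dotV x (nF Fj)).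
  by rewrite /dotV /addV /sclV /crossV /=; ring.
by rewrite xx xi xj dot_cross_l dot_cross_r2; ring.
Qed.

Lemma tri_law Fi Fj Fk (uij uik uji ujk uki ukj : 'rV[R]_2) :
  isfr Fi -> isfr Fj -> isfr Fk -> dot2 uij uij = 1 -> dot2 uji uji = 1 ->
  emb Fi uij = emb Fj uji -> emb Fi uik = emb Fk uki -> emb Fj ujk = emb Fk ukj ->
  dot2 uki ukj = dot2 uij uik * dot2 uji ujk
                 + det2 uij uik * det2 uji ujk * dotV (nF Fi) (nF Fj).
Proof.
move=> Hi Hj Hk h1 h2 e1 e2 e3.
by rewrite -(@emb_dot2 Fk uki ukj Hk) -e2 -e3 (@core_dot Fi Fj uij uji).
Qed.

Definition fb (p q : 'rV[R]_2) (y0 y1 : V) : Fr :=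
  (sclV (det2 p q)^-1 (addV (sclV (q 0 1) y0) (sclV (- p 0 1) y1)),
   sclV (det2 p q)^-1 (addV (sclV (- q 0 0) y0) (sclV (p 0 0) y1))).

Lemma fb_emb1 p q y0 y1 : det2 p q != 0 -> emb (fb p q y0 y1) p = y0.
Proof. by rewrite /fb /emb /embc /det2 => hd; vfield. Qed.
Lemma fb_emb2 p q y0 y1 : det2 p q != 0 -> emb (fb p q y0 y1) q = y1.
Proof. by rewrite /fb /emb /embc /det2 => hd; vfield. Qed.

Lemma fb_frame p q y0 y1 : det2 p q != 0 -> dotV y0 y0 = dot2 p p ->
  dotV y1 y1 = dot2 q q -> dotV y0 y1 = dot2 p q -> isfr (fb p q y0 y1).
Proof.
move=> hd h0 h1 h01.
have e : forall k l m n : R, dotV (addV (sclV k y0) (sclV l y1))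
   (addV (sclV m y0) (sclV n y1)) =
   k * m * dotV y0 y0 + (k * n + l * m) * dotV y0 y1 + l * n * dotV y1 y1.
  by move=> k l m n; rewrite /dotV /addV /sclV /=; ring.
have s : forall (c : R) A B, dotV (sclV c A) (sclV c B) = c ^+ 2 * dotV A B.
  by move=> c A B; rewrite /dotV /sclV /=; ring.
move: hd; rewrite /fb /isfr /= !s !e h0 h1 h01 /dot2 /det2 => hd.
by split; field.
Qed.


Lemma row1_decomp H (u : 'rV[R]_2) : isfr H -> dot2 u u = 1 ->
  H.1 = addV (sclV (u 0 0) (emb H u)) (sclV (- u 0 1) (crossV (nF H) (emb H u))).
Proof.
move=> HH hu; rewrite -Jv_cross //.
transitivity (sclV (dot2 u u) H.1); first by rewrite hu; apply: eqV; rewrite /= mul1r.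
by rewrite /dot2 /Jv /emb /embc; vring.
Qed.

Lemma row2_decomp H (u : 'rV[R]_2) : isfr H -> dot2 u u = 1 ->
  H.2 = addV (sclV (u 0 1) (emb H u)) (sclV (u 0 0) (crossV (nF H) (emb H u))).
Proof.
move=> HH hu; rewrite -Jv_cross //.
transitivity (sclV (dot2 u u) H.2); first by rewrite hu; apply: eqV; rewrite /= mul1r.
by rewrite /dot2 /Jv /emb /embc; vring.
Qed.

Lemma frame_eq_n H H' (u : 'rV[R]_2) : isfr H -> isfr H' -> dot2 u u = 1 ->
  emb H u = emb H' u -> nF H' = nF H -> H' = H.
Proof.
move=> HH HH' hu ex e.
have r1 := row1_decomp _ _ HH hu; have r1' := row1_decomp _ _ HH' hu.
have r2 := row2_decomp _ _ HH hu; have r2' := row2_decomp _ _ HH' hu.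
rewrite -ex e -r1 in r1'; rewrite -ex e -r2 in r2'.
by case: H' r1' r2' {HH' ex e} => a' b' /= -> ->; case: H {r1 r2 HH}.
Qed.

Definition rho (p w : V) := addV w (sclV (-2 * dotV p w) p).
Definition reflF (p : V) (F : Fr) : Fr := (rho p F.1, rho p F.2).

Lemma mirror H H' (u : 'rV[R]_2) p : isfr H -> isfr H' -> dot2 u u = 1 ->
  emb H u = emb H' u -> dotV p p = 1 -> dotV p (emb H u) = 0 ->
  dotV (nF H) p = dotV (nF H') p -> H' = H \/ H' = reflF p H.
Proof.
move=> HH HH' hu ex hp hpx hn.
set x := emb H u.
have xx : dotV x x = 1 by exact: unit_emb.
have Fpx : isfr (p, x) by split => //; rewrite dotC.
set q := crossV p x.
have qq : dotV q q = 1 by have := nn1 _ Fpx.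
have pq : dotV p q = 0 by rewrite /q /dotV /crossV /=; ring.
have xq : dotV x q = 0 by rewrite /q /dotV /crossV /=; ring.
have qx : crossV q x = sclV (-1) p.
  have -> : crossV q x = addV (sclV (dotV p x) x) (sclV (- dotV x x) p).
    by rewrite /q /dotV; vring.
  by rewrite hpx xx; apply: eqV; rewrite /=; ring.
set t := dotV (nF H) p.
have nx : dotV (nF H) x = 0 by rewrite /x /emb n_emb.
have nx' : dotV (nF H') x = 0 by rewrite /x ex /emb n_emb.
have En : nF H = addV (sclV t p) (sclV (dotV (nF H) q) q).
  rewrite {1}(@expand (p, x) (nF H) Fpx) /= nx -/q.
  by rewrite /t; apply: eqV; rewrite /=; ring.
have En' : nF H' = addV (sclV t p) (sclV (dotV (nF H') q) q).
  rewrite {1}(@expand (p, x) (nF H') Fpx) /= nx' -/q.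
  by rewrite /t hn; apply: eqV; rewrite /=; ring.
set s := dotV (nF H) q in En; set s' := dotV (nF H') q in En'.
have dd : forall a b : R, dotV (addV (sclV a p) (sclV b q)) (addV (sclV a p) (sclV b q))
     = a ^+ 2 * dotV p p + 2 * a * b * dotV p q + b ^+ 2 * dotV q q.
  by move=> a b; rewrite /dotV /addV /sclV /=; ring.
have s2 : t ^+ 2 + s ^+ 2 = 1.
  by rewrite -(nn1 _ HH) [in RHS]En dd hp pq qq; ring.
have s2' : t ^+ 2 + s' ^+ 2 = 1.
  by rewrite -(nn1 _ HH') [in RHS]En' dd hp pq qq; ring.
have cr : forall a b : R, crossV (addV (sclV a p) (sclV b q)) x
   = addV (sclV a q) (sclV b (crossV q x)).
  by move=> a b; rewrite /q; vring.
have ss : (s' - s) * (s' + s) = 0.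
  have -> : (s' - s) * (s' + s) = s' ^+ 2 - s ^+ 2 by ring.
  lra.
move/eqP: ss; rewrite mulf_eq0 => /orP[] /eqP hs.
  left.
  have e : nF H' = nF H by rewrite En En'; congr addV; congr sclV; lra.
  exact: (frame_eq_n H H' u HH HH' hu ex e).
right.
have hs' : s' = - s by lra.
have Ea : H.1 = addV (addV (sclV (u 0 0) x) (sclV (- u 0 1 * t) q)) (sclV (u 0 1 * s) p).
  rewrite {1}(row1_decomp _ _ HH hu) -/x En cr qx; apply: eqV; rewrite /=; ring.
have Eb : H.2 = addV (addV (sclV (u 0 1) x) (sclV (u 0 0 * t) q)) (sclV (- u 0 0 * s) p).
  rewrite {1}(row2_decomp _ _ HH hu) -/x En cr qx; apply: eqV; rewrite /=; ring.
have Ea' : H'.1 = addV (addV (sclV (u 0 0) x) (sclV (- u 0 1 * t) q)) (sclV (- u 0 1 * s) p).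
  rewrite {1}(row1_decomp _ _ HH' hu) -ex -/x En' cr qx hs'; apply: eqV; rewrite /=; ring.
have Eb' : H'.2 = addV (addV (sclV (u 0 1) x) (sclV (u 0 0 * t) q)) (sclV (u 0 0 * s) p).
  rewrite {1}(row2_decomp _ _ HH' hu) -ex -/x En' cr qx hs'; apply: eqV; rewrite /=; ring.
have pw : forall a b c : R, dotV p (addV (addV (sclV a x) (sclV b q)) (sclV c p)) = c.
  move=> a b c.
  have -> : dotV p (addV (addV (sclV a x) (sclV b q)) (sclV c p)) =
     a * dotV p x + b * dotV p q + c * dotV p p by rewrite /dotV /addV /sclV /=; ring.
  by rewrite hpx pq hp; ring.
move: Ea' Eb'; case: H' {HH' ex hn nx' En' s' s2' hs hs'} => a' b' /= -> ->.
rewrite /reflF /rho Ea Eb !pw; congr pair; apply: eqV; rewrite /=; ring.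
Qed.

Lemma not_in_plane Fi Fk (uij uik uki : 'rV[R]_2) : isfr Fi -> isfr Fk ->
  det2 uij uik != 0 -> emb Fi uik = emb Fk uki ->
  dotV (nF Fi) (nF Fk) ^+ 2 < 1 -> dotV (emb Fi uij) (nF Fk) != 0.
Proof.
move=> Hi Hk hd e hlt; apply/eqP => h0.
have h1 : dotV (emb Fi uik) (nF Fk) = 0 by rewrite e /emb emb_n.
set g0 := dotV Fi.1 (nF Fk); set g1 := dotV Fi.2 (nF Fk).
have ex : forall w : 'rV[R]_2, dotV (emb Fi w) (nF Fk) = w 0 0 * g0 + w 0 1 * g1.
  by move=> w; rewrite /g0 /g1 /emb /embc /dotV /addV /sclV /=; ring.
rewrite ex in h0; rewrite ex in h1.
have z0 : g0 * det2 uij uik = 0.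
  have -> : g0 * det2 uij uik = uik 0 1 * (uij 0 0 * g0 + uij 0 1 * g1)
     - uij 0 1 * (uik 0 0 * g0 + uik 0 1 * g1) by rewrite /det2; ring.
  by rewrite h0 h1; ring.
have z1 : g1 * det2 uij uik = 0.
  have -> : g1 * det2 uij uik = - uik 0 0 * (uij 0 0 * g0 + uij 0 1 * g1)
     + uij 0 0 * (uik 0 0 * g0 + uik 0 1 * g1) by rewrite /det2; ring.
  by rewrite h0 h1; ring.
move/eqP: z0; rewrite mulf_eq0 (negbTE hd) orbF => /eqP z0.
move/eqP: z1; rewrite mulf_eq0 (negbTE hd) orbF => /eqP z1.
have := perp_n Fi (nF Fk) Hi (nn1 _ Hk).
rewrite dotC -/g0 z0 dotC -/g1 z1 => /(_ erefl erefl).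
by rewrite dotC => h; move: hlt; rewrite h ltxx.
Qed.

Lemma triple_nz F0 F1 Fk (p q : 'rV[R]_2) : isfr F0 -> isfr F1 -> isfr Fk ->
  dot2 p p = 1 -> emb F0 p = emb F1 q ->
  dotV (nF F0) (nF F1) ^+ 2 < 1 -> dotV (emb F0 p) (nF Fk) != 0 ->
  dotV (nF F0) (crossV (nF F1) (nF Fk)) != 0.
Proof.
move=> H0 H1 Hk hp e hlt hx.
set x := emb F0 p in e hx *.
set n0 := nF F0; set n1 := nF F1; set nk := nF Fk.
set w := crossV n0 n1.
have -> : dotV n0 (crossV n1 nk) = dotV w nk by rewrite /w /dotV /crossV /=; ring.
have xx : dotV x x = 1 by exact: unit_emb.
set Y := crossV n0 x.
have n00 : dotV n0 n0 = 1 by exact: nn1.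
have x0 : dotV x n0 = 0 by rewrite /x /emb emb_n.
have x1 : dotV x n1 = 0 by rewrite e /emb emb_n.
have G : isfr (x, Y).
  split => //=; last by rewrite /Y dot_cross_l.
  by rewrite /Y lagrangeV n00 xx dotC x0; ring.
have nG : nF (x, Y) = n0.
  have -> : nF (x, Y) = addV (sclV (dotV x x) n0) (sclV (- dotV x n0) x).
    by rewrite /nF /Y /dotV /=; vring.
  by rewrite xx x0; apply: eqV; rewrite /=; ring.
have wY : dotV w Y = 0.
  by rewrite /w /Y lagrangeV n00 dotC x1 dotC x0; ring.
have w0 : dotV w n0 = 0 by rewrite /w dot_cross_r.
have Ew := @expand (x, Y) w G; rewrite /= wY nG w0 in Ew.
have ww : dotV w w = 1 - dotV n0 n1 ^+ 2.
  by rewrite /w lagrangeV n00 nn1 // dotC; ring.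
have -> : dotV w nk = dotV w x * dotV x nk.
  rewrite {1}Ew /dotV /addV /sclV /=; ring.
rewrite mulf_neq0 //; apply/eqP => wx.
have : dotV w w = 0.
  by rewrite {1}Ew wx /dotV /addV /sclV /=; ring.
by rewrite ww => /eqP; rewrite subr_eq0 => /eqP h; move: hlt; rewrite -h ltxx.
Qed.

Lemma basis_fr F (p : 'rV[R]_2) : isfr F -> dot2 p p = 1 ->
  isfr (emb F p, crossV (nF F) (emb F p)) /\
  nF (emb F p, crossV (nF F) (emb F p)) = nF F.
Proof.
move=> HF hp; set x := emb F p; set n0 := nF F.
have xx : dotV x x = 1 by exact: unit_emb.
have n00 : dotV n0 n0 = 1 by exact: nn1.
have x0 : dotV x n0 = 0 by rewrite /x /emb emb_n.
split.
  split => //=; last by rewrite dot_cross_l.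
  by rewrite lagrangeV n00 xx dotC x0; ring.
have -> : nF (x, crossV n0 x) = addV (sclV (dotV x x) n0) (sclV (- dotV x n0) x).
  by rewrite /nF /dotV /=; vring.
by rewrite xx x0; apply: eqV; rewrite /=; ring.
Qed.

Lemma complete F : isfr F -> forall l m : 'I_3,
  let c v (j : 'I_3) := if j == 0 :> nat then vx v else if j == 1 :> nat then vy v else vz v in
  c F.1 l * c F.1 m + c F.2 l * c F.2 m + c (nF F) l * c (nF F) m = (l == m)%:R.
Proof.
move=> HF l m c.
have key : forall w, w = addV (addV (sclV (dotV w F.1) F.1) (sclV (dotV w F.2) F.2))
    (sclV (dotV w (nF F)) (nF F)) by move=> w; apply: expand.
move: (key (mkV 1 0 0)) (key (mkV 0 1 0)) (key (mkV 0 0 1)); rewrite /c.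
move: (nF F) F.1 F.2 => n a b.
case: a => a1 a2 a3; case: b => b1 b2 b3; case: n => n1 n2 n3.
rewrite /dotV /addV /sclV /=.
move=> [e11 e12 e13] [e21 e22 e23] [e31 e32 e33].
case: l => [[|[|[|l]]]] //= hl; case: m => [[|[|[|m]]]] //= hm.
all: rewrite ?eqxx /= ?mulr0n ?mulr1n.
all: first [ rewrite [in RHS]e11; ring | rewrite [in RHS]e12; ring
  | rewrite [in RHS]e13; ring | rewrite [in RHS]e21; ring | rewrite [in RHS]e22; ring
  | rewrite [in RHS]e23; ring | rewrite [in RHS]e31; ring | rewrite [in RHS]e32; ring
  | rewrite [in RHS]e33; ring ].
Qed.

End Vec.
Arguments addV {R}.
Arguments sclV {R}.
Arguments dotV {R}.
Arguments crossV {R}.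
Arguments eqV {R}.
Arguments isfr {R}.
Arguments nF {R}.
Arguments embc {R}.
Arguments emb {R}.
Arguments emb_dot {R}.
Arguments emb_n {R}.
Arguments n_emb {R}.
Arguments n_cross {R}.
Arguments embcD {R}.
Arguments lagrangeV {R}.
Arguments dot_cross_l {R}.
Arguments dot_cross_r {R}.
Arguments dot_cross_r2 {R}.
Arguments dotC {R}.
Arguments expand {R}.
Arguments nn1 {R}.
Arguments perp_n {R}.
Arguments det_frame {R H H' p q}.
Arguments Jv {R}.
Arguments emb_decomp {R}.
Arguments Jv_cross {R}.
Arguments unit_emb {R}.
Arguments emb_dot2 {R}.
Arguments core_dot {R Fi Fj p q w w'}.
Arguments tri_law {R}.
Arguments fb {R}.
Arguments fb_emb1 {R}.
Arguments fb_emb2 {R}.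
Arguments fb_frame {R}.
Arguments row1_decomp {R}.
Arguments row2_decomp {R}.
Arguments frame_eq_n {R}.
Arguments rho {R}.
Arguments reflF {R}.
Arguments mirror {R}.
Arguments not_in_plane {R Fi Fk uij uik uki}.
Arguments triple_nz {R F0 F1 Fk p q}.
Arguments mkV {R}.
Arguments vx {R}.
Arguments vy {R}.
Arguments vz {R}.
Arguments basis_fr {R}.
Arguments complete {R}.

Section Main.
Variable R : realType.
Variable N : nat.
Variable u : 'I_N -> 'I_N -> 'rV[R]_2.

Definition ttv i j k :=
  (dot2 (u k i) (u k j) - dot2 (u i j) (u i k) * dot2 (u j i) (u j k))
  / (det2 (u i j) (u i k) * det2 (u j i) (u j k)).

Hypothesis Hu : forall {p q : 'I_N}, p != q -> dot2 (u p q) (u p q) = 1.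
Hypothesis Hd : forall {i j k : 'I_N}, i != j -> i != k -> j != k -> det2 (u i j) (u i k) != 0.
Hypothesis Ht : forall {i j k : 'I_N}, i != j -> i != k -> j != k -> ttv i j k ^+ 2 < 1.
Hypothesis HL : forall {i j k m : 'I_N}, i != j -> i != k -> i != m -> j != k -> j != m ->
  k != m -> ttv i j k = ttv i j m.

Lemma TLt (Fi Fj Fk : Fr R) (i j k : 'I_N) : i != j -> i != k -> j != k ->
  isfr Fi -> isfr Fj -> isfr Fk ->
  emb Fi (u i j) = emb Fj (u j i) -> emb Fi (u i k) = emb Fk (u k i) ->
  emb Fj (u j k) = emb Fk (u k j) -> dotV (nF Fi) (nF Fj) = ttv i j k.
Proof.
move=> ij ik jk Hi Hj Hk e1 e2 e3.
have ji : j != i by rewrite eq_sym.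
have := @tri_law R Fi Fj Fk (u i j) (u i k) (u j i) (u j k) (u k i) (u k j)
  Hi Hj Hk (Hu ij) (Hu ji) e1 e2 e3.
have d1 := Hd ij ik jk; have d2 := Hd ji jk ik.
rewrite /ttv => ->; field.
by rewrite d1 d2.
Qed.
Arguments TLt {Fi Fj Fk i j k}.

Lemma consist (F0 F1 Fk Fm : Fr R) (i0 i1 k m : 'I_N) :
  i0 != i1 -> i0 != k -> i0 != m -> i1 != k -> i1 != m -> k != m ->
  isfr F0 -> isfr F1 -> isfr Fk -> isfr Fm ->
  emb F0 (u i0 i1) = emb F1 (u i1 i0) ->
  emb F0 (u i0 k) = emb Fk (u k i0) -> emb F1 (u i1 k) = emb Fk (u k i1) ->
  emb F0 (u i0 m) = emb Fm (u m i0) -> emb F1 (u i1 m) = emb Fm (u m i1) ->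
  emb Fk (u k m) = emb Fm (u m k).
Proof.
move=> n01 n0k n0m n1k n1m nkm H0 H1 Hk Hm e01 e0k e1k e0m e1m.
have n10 : i1 != i0 by rewrite eq_sym.
have nk0 : k != i0 by rewrite eq_sym.
have nm0 : m != i0 by rewrite eq_sym.
have nk1 : k != i1 by rewrite eq_sym.
have nm1 : m != i1 by rewrite eq_sym.
have nmk : m != k by rewrite eq_sym.
set y := emb Fk (u k m).
have t0k : dotV (nF F0) (nF Fk) = ttv i0 k m.
  rewrite (TLt n0k n01 nk1 H0 Hk H1 e0k e01 (esym e1k)).
  exact: HL.
have t1k : dotV (nF F1) (nF Fk) = ttv i1 k m.
  rewrite (TLt n1k n10 nk0 H1 Hk H0 e1k (esym e01) (esym e0k)).
  exact: HL.
set F' := fb (u m i0) (u m k) (emb F0 (u i0 m)) y.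
set F'' := fb (u m i1) (u m k) (emb F1 (u i1 m)) y.
have dm0k := Hd nm0 nmk n0k; have dm1k := Hd nm1 nmk n1k.
have HF' : isfr F'.
  apply: fb_frame => //; rewrite ?unit_emb ?Hu //.
  rewrite /y (core_dot H0 Hk (Hu n0k) (Hu nk0) e0k) t0k /ttv.
  by field; rewrite !Hd.
have HF'' : isfr F''.
  apply: fb_frame => //; rewrite ?unit_emb ?Hu //.
  rewrite /y (core_dot H1 Hk (Hu n1k) (Hu nk1) e1k) t1k /ttv.
  by field; rewrite !Hd.
have e'0 : emb F' (u m i0) = emb F0 (u i0 m) by exact: fb_emb1.
have e'k : emb F' (u m k) = y by exact: fb_emb2.
have e''1 : emb F'' (u m i1) = emb F1 (u i1 m) by exact: fb_emb1.
have e''k : emb F'' (u m k) = y by exact: fb_emb2.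
have a1 : dotV (nF Fk) (nF F') = ttv k m i0.
  exact: (TLt nkm nk0 nm0 Hk HF' H0 (esym e'k) (esym e0k) e'0).
have a2 : dotV (nF Fk) (nF F'') = ttv k m i1.
  exact: (TLt nkm nk1 nm1 Hk HF'' H1 (esym e''k) (esym e1k) e''1).
have a3 : ttv k m i0 = ttv k m i1 by exact: HL.
have b1 : dotV (nF F0) (nF F') = ttv i0 m k.
  exact: (TLt n0m n0k nmk H0 HF' Hk (esym e'0) e0k e'k).
have b2 : dotV (nF F0) (nF Fm) = ttv i0 m i1.
  exact: (TLt n0m n01 nm1 H0 Hm H1 e0m e01 (esym e1m)).
have b3 : ttv i0 m k = ttv i0 m i1 by exact: HL.
have c1 : dotV (nF F1) (nF F'') = ttv i1 m k.
  exact: (TLt n1m n1k nmk H1 HF'' Hk (esym e''1) e1k e''k).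
have c2 : dotV (nF F1) (nF Fm) = ttv i1 m i0.
  exact: (TLt n1m n10 nm0 H1 Hm H0 e1m (esym e01) (esym e0m)).
have c3 : ttv i1 m k = ttv i1 m i0 by exact: HL.
have M1 : F' = Fm \/ F' = reflF (nF F0) Fm.
  apply: (mirror Fm F' (u m i0) (nF F0) Hm HF' (Hu nm0) _ (nn1 F0 H0)).
  - by rewrite e'0 e0m.
  - by rewrite -e0m /emb n_emb.
  - by rewrite dotC b2 dotC b1 b3.
have M2 : F'' = Fm \/ F'' = reflF (nF F1) Fm.
  apply: (mirror Fm F'' (u m i1) (nF F1) Hm HF'' (Hu nm1) _ (nn1 F1 H1)).
  - by rewrite e''1 e1m.
  - by rewrite -e1m /emb n_emb.
  - by rewrite dotC c2 dotC c1 c3.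
have M3 : F'' = F' \/ F'' = reflF (nF Fk) F'.
  apply: (mirror F' F'' (u m k) (nF Fk) HF' HF'' (Hu nmk) _ (nn1 Fk Hk)).
  - by rewrite e'k e''k.
  - by rewrite e'k /y /emb n_emb.
  - by rewrite dotC a1 dotC a2 a3.
case: M1 => [E1|E1]; first by rewrite -E1 e'k.
case: M2 => [E2|E2]; first by rewrite -E2 e''k.
case: M3 => [E3|E3].
  suff E : Fm = F' by rewrite E e'k.
  apply: (det_frame (Hd nm0 nm1 n01)); first by rewrite e'0 e0m.
  by rewrite -E3 e''1 e1m.
exfalso.
set n0 := nF F0; set n1 := nF F1; set nk := nF Fk.
have tnz : dotV n0 (crossV n1 nk) != 0.
  apply: (triple_nz H0 H1 Hk (Hu n01) e01).
    by rewrite /n0 /n1 (TLt n01 n0k n1k H0 H1 Hk e01 e0k e1k) Ht.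
  apply: (not_in_plane H0 Hk (Hd n01 n0k n1k) e0k).
  by rewrite t0k Ht.
have key : forall r, rho n1 r = rho nk (rho n0 r) -> dotV n0 r = 0.
  move=> r h.
  have : dotV (rho n1 r) (crossV n1 nk) - dotV (rho nk (rho n0 r)) (crossV n1 nk)
      = 2 * dotV n0 r * dotV n0 (crossV n1 nk).
    by rewrite /rho /dotV /addV /sclV /crossV /=; ring.
  rewrite h subrr => /eqP; rewrite eq_sym !mulf_eq0 (negbTE tnz) orbF.
  by case/orP => /eqP // h2; move: h2; lra.
have E : reflF n1 Fm = reflF nk (reflF n0 Fm) by rewrite -E2 E3 E1.
have r1 : dotV n0 Fm.1 = 0 by apply: key; exact: (congr1 fst E).
have r2 : dotV n0 Fm.2 = 0 by apply: key; exact: (congr1 snd E).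
have := perp_n Fm n0 Hm (nn1 F0 H0) r1 r2.
rewrite /n0 b2 => h; have := Ht n0m n01 nm1; by rewrite h ltxx.
Qed.

Variables i0 i1 i2 : 'I_N.
Hypotheses (n01 : i0 != i1) (n02 : i0 != i2) (n12 : i1 != i2).

Definition T0 := ttv i0 i1 i2.
Definition s0 := Num.sqrt (1 - T0 ^+ 2).
Definition F0 : Fr R := (mkV 1 0 0, mkV 0 1 0).
Definition X0 := emb F0 (u i0 i1).
Definition Y0 := Jv (u i0 i1) F0.
Definition W0 := addV (sclV T0 Y0) (sclV s0 (mkV 0 0 1)).
Definition F1 : Fr R :=
  (addV (sclV (u i1 i0 0 0) X0) (sclV (- u i1 i0 0 1) W0),
   addV (sclV (u i1 i0 0 1) X0) (sclV (u i1 i0 0 0) W0)).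
Definition Fo k : Fr R := fb (u k i0) (u k i1) (emb F0 (u i0 k)) (emb F1 (u i1 k)).
Definition Fam k := if k == i0 then F0 else if k == i1 then F1 else Fo k.

Lemma H0 : isfr F0.
Proof. by split; rewrite /dotV /=; ring. Qed.

Lemma s0sq : s0 ^+ 2 = 1 - T0 ^+ 2.
Proof. by rewrite /s0 sqr_sqrtr // subr_ge0 ltW // Ht. Qed.

Lemma H1 : isfr F1.
Proof.
have n10 : i1 != i0 by rewrite eq_sym.
have hq := Hu n01; have hp := Hu n10.
have XX : dotV X0 X0 = 1 by exact: (unit_emb F0 (u i0 i1) H0 hq).
have WW : dotV W0 W0 = 1.
  move: hq; rewrite /dot2 => hq.
  transitivity (T0 ^+ 2 * (u i0 i1 0 0 * u i0 i1 0 0 + u i0 i1 0 1 * u i0 i1 0 1)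
                + s0 ^+ 2); last by rewrite hq s0sq; ring.
  by rewrite /W0 /Y0 /Jv /embc /dotV /addV /sclV /=; ring.
have XW : dotV X0 W0 = 0.
  by rewrite /X0 /W0 /Y0 /emb /Jv /embc /dotV /=; ring.
have e : forall a b c d : R, dotV (addV (sclV a X0) (sclV b W0)) (addV (sclV c X0) (sclV d W0))
   = a * c * dotV X0 X0 + (a * d + b * c) * dotV X0 W0 + b * d * dotV W0 W0.
  by move=> a b c d; rewrite /dotV /addV /sclV /=; ring.
move: hp; rewrite /dot2 => hp.
split; rewrite /F1 /= e XX WW XW; last by ring.
  by rewrite -{3}hp; ring.
by rewrite -{3}hp; ring.
Qed.

Lemma e01 : emb F0 (u i0 i1) = emb F1 (u i1 i0).
Proof.
have n10 : i1 != i0 by rewrite eq_sym.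
have := Hu n10; rewrite /dot2 => hp.
transitivity (sclV (u i1 i0 0 0 * u i1 i0 0 0 + u i1 i0 0 1 * u i1 i0 0 1) X0).
  by rewrite hp; apply: eqV; rewrite /= mul1r.
by rewrite /F1 /emb /embc; apply: eqV; rewrite /addV /sclV /=; ring.
Qed.

Lemma n0n1 : dotV (nF F0) (nF F1) = T0.
Proof.
have := Hu n01; rewrite /dot2 => hq.
have n10 : i1 != i0 by rewrite eq_sym.
have := Hu n10; rewrite /dot2 => hp.
transitivity (T0 * (u i0 i1 0 0 * u i0 i1 0 0 + u i0 i1 0 1 * u i0 i1 0 1)
   * (u i1 i0 0 0 * u i1 i0 0 0 + u i1 i0 0 1 * u i1 i0 0 1)); last by rewrite hp hq; ring.
by rewrite /nF /F1 /F0 /W0 /Y0 /X0 /Jv /emb /embc /dotV /crossV /addV /sclV /=; ring.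
Qed.

Lemma T0k {k} : k != i0 -> k != i1 -> T0 = ttv i0 i1 k.
Proof.
move=> k0 k1; case: (eqVneq k i2) => [->|k2] //.
by apply: HL => //; rewrite eq_sym.
Qed.

Lemma Ho {k} : k != i0 -> k != i1 -> isfr (Fo k).
Proof.
move=> k0 k1.
have n10 : i1 != i0 by rewrite eq_sym.
have n0k : i0 != k by rewrite eq_sym.
have n1k : i1 != k by rewrite eq_sym.
apply: fb_frame; first exact: Hd.
- by rewrite (unit_emb F0 _ H0 (Hu n0k)) Hu.
- by rewrite (unit_emb F1 _ H1 (Hu n1k)) Hu.
rewrite (core_dot H0 H1 (Hu n01) (Hu n10) e01) n0n1 (T0k k0 k1) /ttv.
by field; rewrite !Hd.
Qed.

Lemma eo0 {k} : k != i0 -> k != i1 -> emb F0 (u i0 k) = emb (Fo k) (u k i0).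
Proof. by move=> k0 k1; rewrite fb_emb1 // Hd. Qed.
Lemma eo1 {k} : k != i0 -> k != i1 -> emb F1 (u i1 k) = emb (Fo k) (u k i1).
Proof. by move=> k0 k1; rewrite fb_emb2 // Hd. Qed.

Lemma Hfam p : isfr (Fam p).
Proof.
rewrite /Fam; case: ifP => h0; first exact: H0.
case: ifP => h1; first exact: H1.
by apply: Ho; apply/negbT.
Qed.

Lemma rz_fam p q : p != q -> emb (Fam p) (u p q) = emb (Fam q) (u q p).
Proof.
move=> pq; rewrite /Fam.
case: (eqVneq p i0) => [->|p0].
  case: (eqVneq q i0) => [qe|q0]; first by move: pq; rewrite qe; move/negP.
  case: (eqVneq q i1) => [->|q1]; first exact: e01.
  exact: eo0.
case: (eqVneq p i1) => [->|p1].
  case: (eqVneq q i0) => [->|q0]; first exact: (esym e01).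
  case: (eqVneq q i1) => [qe|q1]; first by move: pq; rewrite qe; move/negP.
  exact: eo1.
case: (eqVneq q i0) => [->|q0]; first exact: (esym (eo0 p0 p1)).
case: (eqVneq q i1) => [->|q1]; first exact: (esym (eo1 p0 p1)).
apply: (consist F0 F1 (Fo p) (Fo q) i0 i1 p q) => //;
  rewrite ?(eq_sym i0) ?(eq_sym i1) //.
- exact: H0.
- exact: H1.
- exact: Ho.
- exact: Ho.
- exact: e01.
- exact: eo0.
- exact: eo1.
- exact: eo0.
- exact: eo1.
Qed.

Lemma third (i j : 'I_N) : exists k, (k != i) && (k != j).
Proof.
case: (eqVneq i0 i) => [ei|ni]; last case: (eqVneq i0 j) => [ej|nj].
- case: (eqVneq i1 j) => [ej|nj]; first by exists i2; rewrite -ei -ej eq_sym n02 eq_sym n12.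
  by exists i1; rewrite -ei eq_sym n01 nj.
- case: (eqVneq i1 i) => [ei|ni']; first by exists i2; rewrite -ei -ej eq_sym n12 eq_sym n02.
  by exists i1; rewrite -ej ni' eq_sym n01.
- by exists i0; rewrite ni nj.
Qed.

Definition rzall (G : 'I_N -> Fr R) := (forall p, isfr (G p)) /\
  (forall p q, p != q -> emb (G p) (u p q) = emb (G q) (u q p)).

Lemma nlt1 G i j : rzall G -> i != j -> dotV (nF (G i)) (nF (G j)) ^+ 2 < 1.
Proof.
move=> [HG RG] ij; have [k /andP[ki kj]] := third i j.
have ik : i != k by rewrite eq_sym.
have jk : j != k by rewrite eq_sym.
by rewrite (TLt ij ik jk (HG i) (HG j) (HG k) (RG _ _ ij) (RG _ _ ik) (RG _ _ jk)) Ht.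
Qed.

Lemma nip G i j k : rzall G -> i != j -> i != k -> j != k ->
  dotV (emb (G i) (u i j)) (nF (G k)) != 0.
Proof.
move=> [HG RG] ij ik jk.
apply: (not_in_plane (HG i) (HG k) (Hd ij ik jk) (RG _ _ ik)).
exact: (nlt1 G i k (conj HG RG) ik).
Qed.

Lemma planes_ne G i j : rzall G -> i != j ->
  ~ (dotV (G j).1 (nF (G i)) = 0 /\ dotV (G j).2 (nF (G i)) = 0).
Proof.
move=> RG ij [h1 h2].
have [HG _] := RG.
have := perp_n (G j) (nF (G i)) (HG j) (nn1 _ (HG i)); rewrite !(dotC (nF (G i))).
move=> /(_ h1 h2) h; have ji : j != i by rewrite eq_sym.
have := nlt1 G j i RG ji; by rewrite h ltxx.
Qed.

Section Uniq.
Variables G H : 'I_N -> Fr R.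
Hypotheses (RG : rzall G) (RH : rzall H).

Definition xG := emb (G i0) (u i0 i1).
Definition nG := nF (G i0).
Definition YG := crossV nG xG.
Definition xH := emb (H i0) (u i0 i1).
Definition nH := nF (H i0).
Definition YH := crossV nH xH.
Definition sG := dotV (crossV (nF (G i1)) xG) nG.
Definition sH := dotV (crossV (nF (H i1)) xH) nH.
Definition eps : R := if sH == sG then 1 else -1.
Definition Lmap w := addV (addV (sclV (dotV w xG) xH) (sclV (dotV w YG) YH))
  (sclV (eps * dotV w nG) nH).

Lemma Llin a b v w :
  Lmap (addV (sclV a v) (sclV b w)) = addV (sclV a (Lmap v)) (sclV b (Lmap w)).
Proof. by rewrite /Lmap /dotV; apply: eqV; rewrite /addV /sclV /=; ring. Qed.

Lemma emb_L (F : Fr R) w : emb (Lmap F.1, Lmap F.2) w = Lmap (emb F w).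
Proof. by rewrite /emb /embc Llin. Qed.

Lemma basG : isfr (xG, YG) /\ nF (xG, YG) = nG.
Proof. by apply: basis_fr; [exact: RG.1 | exact: Hu]. Qed.
Lemma basH : isfr (xH, YH) /\ nF (xH, YH) = nH.
Proof. by apply: basis_fr; [exact: RH.1 | exact: Hu]. Qed.

Lemma Lbasis a b : Lmap (addV (sclV a xG) (sclV b YG)) = addV (sclV a xH) (sclV b YH).
Proof.
have [[h1 h2 h3] e] := basG.
have n1 : dotV xG nG = 0 by rewrite /xG /nG /emb emb_n.
have n2 : dotV YG nG = 0 by rewrite /YG dot_cross_r.
rewrite /= in h1 h2 h3.
have -> : Lmap (addV (sclV a xG) (sclV b YG)) =
  addV (addV (sclV (a * dotV xG xG + b * dotV xG YG) xH)
             (sclV (a * dotV xG YG + b * dotV YG YG) YH))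
       (sclV (eps * (a * dotV xG nG + b * dotV YG nG)) nH).
  by rewrite /Lmap /dotV; apply: eqV; rewrite /addV /sclV /=; ring.
by rewrite h1 h2 h3 n1 n2; apply: eqV; rewrite /addV /sclV /=; ring.
Qed.

Lemma L0 w : Lmap (emb (G i0) w) = emb (H i0) w.
Proof.
have [HG _] := RG; have [HH _] := RH.
rewrite (emb_decomp (G i0) (u i0 i1) w (Hu n01)) (emb_decomp (H i0) (u i0 i1) w (Hu n01)).
by rewrite !Jv_cross // Lbasis.
Qed.

Lemma L1 w : Lmap (emb (G i1) w) = emb (H i1) w.
Proof.
have [HG RG'] := RG; have [HH RH'] := RH.
have n10 : i1 != i0 by rewrite eq_sym.
have eG : emb (G i1) (u i1 i0) = xG by rewrite /xG RG'.
have eH : emb (H i1) (u i1 i0) = xH by rewrite /xH RH'.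
rewrite (emb_decomp (G i1) (u i1 i0) w (Hu n10)) (emb_decomp (H i1) (u i1 i0) w (Hu n10)).
rewrite !Jv_cross // eG eH Llin.
have [bG eGn] := basG; have [bH eHn] := basH.
have TG : dotV (nF (G i1)) nG = ttv i0 i1 i2.
  by rewrite dotC /nG (TLt n01 n02 n12 (HG i0) (HG i1) (HG i2)) //; apply: RG'.
have TH : dotV (nF (H i1)) nH = ttv i0 i1 i2.
  by rewrite dotC /nH (TLt n01 n02 n12 (HH i0) (HH i1) (HH i2)) //; apply: RH'.
have xGn : dotV xG (nF (G i1)) = 0 by rewrite -eG /emb emb_n.
have xHn : dotV xH (nF (H i1)) = 0 by rewrite -eH /emb emb_n.
have xxG : dotV xG xG = 1 by case: bG.
have xxH : dotV xH xH = 1 by case: bH.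
have xnG : dotV xG nG = 0 by rewrite /xG /emb emb_n.
have xnH : dotV xH nH = 0 by rewrite /xH /emb emb_n.
set cG := crossV (nF (G i1)) xG; set cH := crossV (nF (H i1)) xH.
have cYG : dotV cG YG = ttv i0 i1 i2 by rewrite /cG /YG lagrangeV xxG xnG TG; ring.
have cYH : dotV cH YH = ttv i0 i1 i2 by rewrite /cH /YH lagrangeV xxH xnH TH; ring.
have cxG : dotV cG xG = 0 by rewrite /cG dot_cross_r2.
have cxH : dotV cH xH = 0 by rewrite /cH dot_cross_r2.
have EcH := @expand _ (xH, YH) cH bH; rewrite /= eHn cxH cYH -/sH in EcH.
have EcG := @expand _ (xG, YG) cG bG; rewrite /= eGn cxG cYG -/sG in EcG.
have ccG : dotV cG cG = 1.
  by rewrite /cG lagrangeV xxG nn1 ?HG // (dotC (nF (G i1)) xG) xGn; ring.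
have ccH : dotV cH cH = 1.
  by rewrite /cH lagrangeV xxH nn1 ?HH // (dotC (nF (H i1)) xH) xHn; ring.
have dd : forall (x Y n : V R) (a b : R), dotV Y Y = 1 -> dotV n n = 1 -> dotV Y n = 0 ->
   dotV (addV (addV (sclV 0 x) (sclV a Y)) (sclV b n))
        (addV (addV (sclV 0 x) (sclV a Y)) (sclV b n)) = a ^+ 2 + b ^+ 2.
  move=> x Y n a b h1 h2 h3.
  have -> : dotV (addV (addV (sclV 0 x) (sclV a Y)) (sclV b n))
        (addV (addV (sclV 0 x) (sclV a Y)) (sclV b n)) =
     a ^+ 2 * dotV Y Y + 2 * a * b * dotV Y n + b ^+ 2 * dotV n n.
    by rewrite /dotV /addV /sclV /=; ring.
  by rewrite h1 h2 h3; ring.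
have sqG : ttv i0 i1 i2 ^+ 2 + sG ^+ 2 = 1.
  rewrite -ccG [in RHS]EcG dd //; first by case: bG.
  - by rewrite -eGn nn1.
  - by rewrite /YG dot_cross_r.
have sqH : ttv i0 i1 i2 ^+ 2 + sH ^+ 2 = 1.
  rewrite -ccH [in RHS]EcH dd //; first by case: bH.
  - by rewrite -eHn nn1.
  - by rewrite /YH dot_cross_r.
have es : eps * sG = sH.
  rewrite /eps; case: eqP => [->|ne]; first by rewrite mul1r.
  have : (sH - sG) * (sH + sG) = 0.
    have -> : (sH - sG) * (sH + sG) = sH ^+ 2 - sG ^+ 2 by ring.
    lra.
  move/eqP; rewrite mulf_eq0 => /orP[/eqP h|/eqP h]; first by exfalso; apply: ne; lra.
  lra.
have LcG : Lmap cG = cH.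
  rewrite [RHS]EcH /Lmap cxG cYG -/cG.
  have -> : dotV cG nG = sG by [].
  by rewrite es.
have LxG : Lmap xG = xH.
  have := Lbasis 1 0.
  have e1 : forall v : V R, addV (sclV 1 v) (sclV 0 YG) = v.
    by move=> v; apply: eqV; rewrite /addV /sclV /=; ring.
  have e2 : forall v : V R, addV (sclV 1 v) (sclV 0 YH) = v.
    by move=> v; apply: eqV; rewrite /addV /sclV /=; ring.
  by rewrite e1 e2.
by rewrite LxG LcG.
Qed.

Lemma Lfr p : H p = (Lmap (G p).1, Lmap (G p).2).
Proof.
have [HG RG'] := RG; have [HH RH'] := RH.
have n10 : i1 != i0 by rewrite eq_sym.
case: (eqVneq p i0) => [->|p0].
  apply: (det_frame (Hd n01 n02 n12)); by rewrite emb_L L0.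
case: (eqVneq p i1) => [->|p1].
  apply: (det_frame (Hd n10 n12 n02)); by rewrite emb_L L1.
have n0p : i0 != p by rewrite eq_sym.
have n1p : i1 != p by rewrite eq_sym.
apply: (det_frame (Hd p0 p1 n01)); rewrite emb_L.
  by rewrite -RG' // L0 RH'.
by rewrite -RG' // L1 RH'.
Qed.


End Uniq.

End Main.

Section Bridge.
Variable R : realType.

Definition compV (w : V R) (j : 'I_3) : R :=
  if j == 0 :> nat then vx w else if j == 1 :> nat then vy w else vz w.
Definition rowV (M : 'M[R]_(2,3)) (r : 'I_2) : V R := mkV (M r 0) (M r 1) (M r 2).
Definition frOf (M : 'M[R]_(2,3)) : Fr R := (rowV M 0, rowV M 1).
Definition toM (F : Fr R) : 'M[R]_(2,3) :=
  \matrix_(r < 2, j < 3) compV (if r == 0 :> nat then F.1 else F.2) j.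
Definition toRowV (x : V R) : 'rV[R]_3 := \row_(j < 3) compV x j.
Definition vecOf (x : 'rV[R]_3) : V R := mkV (x 0 0) (x 0 1) (x 0 2).

Lemma sum3 (f : 'I_3 -> R) : \sum_(j < 3) f j = f 0 + f 1 + f 2.
Proof. by rewrite !big_ord_recr big_ord0 /= add0r; congr (_ + _ + _); apply: congr1; apply: val_inj. Qed.

Lemma sum2 (f : 'I_2 -> R) : \sum_(j < 2) f j = f 0 + f 1.
Proof. by rewrite !big_ord_recr big_ord0 /= add0r; congr (_ + _); apply: congr1; apply: val_inj. Qed.

Lemma ord3 (j : 'I_3) : j = 0 \/ j = 1 \/ j = 2.
Proof.
case: j => [[|[|[|j]]]] // hj; [left|right;left|right;right]; exact: val_inj.
Qed.

Lemma ord2 (j : 'I_2) : j = 0 \/ j = 1.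
Proof. case: j => [[|[|j]]] // hj; [left|right]; exact: val_inj. Qed.

Lemma toMK M : toM (frOf M) = M.
Proof.
apply/matrixP => r j; rewrite mxE.
by case: (ord2 r) => [->|->]; case: (ord3 j) => [->|[->|->]].
Qed.

Lemma frOfK F : frOf (toM F) = F.
Proof. by case: F => a b; rewrite /frOf /rowV /toM !mxE /=; case: a; case: b. Qed.

Lemma iotaE M (w : 'rV[R]_2) : Defs.iota M w = toRowV (emb (frOf M) w).
Proof.
apply/rowP => j; rewrite /Defs.iota !mxE sum2 /=.
by case: (ord3 j) => [->|[->|->]]; rewrite /compV /=.
Qed.

Lemma toRowV_inj : injective toRowV.
Proof.
move=> x y /rowP h.
have h0 := h 0; have h1 := h 1; have h2 := h 2.
rewrite !mxE /compV /= in h0 h1 h2.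
by move: h0 h1 h2; case: x {h} => ? ? ?; case: y => ? ? ? /= -> -> ->.
Qed.

Lemma vecOfK x : toRowV (vecOf x) = x.
Proof. by apply/rowP => j; rewrite mxE; case: (ord3 j) => [->|[->|->]]. Qed.

Lemma frameE M : is_frame M <-> isfr (frOf M).
Proof.
have E : forall r s, (M *m M^T) r s = dotV (rowV M r) (rowV M s).
  by move=> r s; rewrite !mxE sum3 !mxE /dotV /=.
rewrite /is_frame /isfr; split.
  move/matrixP => h; have h00 := h 0 0; have h11 := h 1 1; have h01 := h 0 1.
  by rewrite !E !mxE /= in h00 h11 h01; split.
case=> h1 h2 h3; apply/matrixP => r s; rewrite E mxE.
case: (ord2 r) => [->|->]; case: (ord2 s) => [->|->] //=.
by rewrite dotC.
Qed.

End Bridge.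
Arguments compV {R}.
Arguments rowV {R}.
Arguments frOf {R}.
Arguments toM {R}.
Arguments toRowV {R}.
Arguments vecOf {R}.
Arguments sum3 {R}.
Arguments sum2 {R}.
Arguments toMK {R}.
Arguments frOfK {R}.
Arguments iotaE {R}.
Arguments toRowV_inj {R}.
Arguments vecOfK {R}.
Arguments frameE {R}.

Section Bridge2.
Variable R : realType.
Lemma sub_perp (x : 'rV[R]_3) (M : 'M[R]_(2,3)) :
  (x <= M)%MS -> dotV (vecOf x) (nF (frOf M)) = 0.
Proof.
case/submxP => D ->.
rewrite /vecOf /frOf /rowV /nF /dotV /crossV /= !mxE !sum2.
ring.
Qed.

Lemma rows_perp (M' M : 'M[R]_(2,3)) : (M' <= M)%MS ->
  dotV (rowV M' 0) (nF (frOf M)) = 0 /\ dotV (rowV M' 1) (nF (frOf M)) = 0.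
Proof.
move=> h.
have e : forall r, rowV M' r = vecOf (row r M').
  by move=> r; rewrite /rowV /vecOf !mxE.
by rewrite !e; split; apply: sub_perp; apply: submx_trans h; apply: row_sub.
Qed.
End Bridge2.
Arguments sub_perp {R}.
Arguments rows_perp {R}.

Section Hyps.
Variables (R : realType) (N : nat) (v : 'I_N -> 'I_N -> 'rV[R]_2).
Hypothesis hcl : common_lines_data v.

Definition un p q := (norm2 (v p q))^-1 *: v p q.

Lemma dot2Z (k l : R) w w' : dot2 (k *: w) (l *: w') = k * l * dot2 w w'.
Proof. by rewrite /dot2 !mxE; ring. Qed.
Lemma det2Z (k l : R) w w' : det2 (k *: w) (l *: w') = k * l * det2 w w'.
Proof. by rewrite /det2 !mxE; ring. Qed.

Lemma dot2_ge0 (w : 'rV[R]_2) : 0 <= dot2 w w.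
Proof. by rewrite /dot2; nra. Qed.

Lemma dot2_eq0 (w : 'rV[R]_2) : dot2 w w = 0 -> w = 0.
Proof.
rewrite /dot2 => h.
have h0 : w 0 0 = 0 by apply/eqP; rewrite -sqrf_eq0; apply/eqP; nra.
have h1 : w 0 1 = 0 by apply/eqP; rewrite -sqrf_eq0; apply/eqP; nra.
apply/rowP => j; rewrite mxE; case: (ord2 j) => ->; by [rewrite h0 | rewrite h1].
Qed.

Lemma vnz {p q} : p != q -> v p q != 0.
Proof.
move=> pq; have [[h|h] e] := hcl _ _ pq; first done.
apply/eqP => h0; apply: (negP h); apply/eqP; apply: dot2_eq0.
by rewrite -e h0 /dot2 !mxE; ring.
Qed.

Lemma dot2_gt0 {p q} : p != q -> 0 < dot2 (v p q) (v p q).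
Proof.
move=> pq; rewrite lt_def dot2_ge0 andbT; apply/eqP => h.
by move: (vnz pq); rewrite (dot2_eq0 _ h) eqxx.
Qed.

Lemma norm_gt0 {p q} : p != q -> 0 < norm2 (v p q).
Proof. by move=> pq; rewrite /norm2 sqrtr_gt0 dot2_gt0. Qed.

Lemma nsym {p q} : p != q -> norm2 (v p q) = norm2 (v q p).
Proof. by move=> pq; rewrite /norm2 (hcl _ _ pq).2. Qed.

Lemma Hun {p q} : p != q -> dot2 (un p q) (un p q) = 1.
Proof.
move=> pq; rewrite /un dot2Z.
have n0 := norm_gt0 pq.
have : norm2 (v p q) ^+ 2 = dot2 (v p q) (v p q) by rewrite /norm2 sqr_sqrtr // dot2_ge0.
move=> e; rewrite -e; field; exact: lt0r_neq0.
Qed.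

Lemma vE {p q} : p != q -> v p q = norm2 (v p q) *: un p q.
Proof.
move=> pq; rewrite /un scalerA mulfV ?scale1r //; exact: lt0r_neq0 (norm_gt0 pq).
Qed.

Lemma angleE {p q r} : p != q -> p != r ->
  angle2 (v p q) (v p r) = acos (dot2 (un p q) (un p r)).
Proof.
move=> pq pr; rewrite /angle2 /un dot2Z; congr acos.
have := norm_gt0 pq; have := norm_gt0 pr; rewrite /norm2 => h1 h2.
by field; rewrite !lt0r_neq0.
Qed.

Lemma unit_id (a b : 'rV[R]_2) : dot2 a a = 1 -> dot2 b b = 1 ->
  dot2 a b ^+ 2 + det2 a b ^+ 2 = 1.
Proof.
move=> ha hb; rewrite -[1]mul1r -{1}ha -hb /dot2 /det2; ring.
Qed.

Lemma sti_core (hsti : forall i j k : 'I_N, i != j -> i != k -> j != k ->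
    strict_STI v i j k) i j k : i != j -> i != k -> j != k ->
  det2 (un i j) (un i k) != 0 /\
  (dot2 (un k i) (un k j) - dot2 (un i j) (un i k) * dot2 (un j i) (un j k)) ^+ 2 <
  (det2 (un i j) (un i k) * det2 (un j i) (un j k)) ^+ 2.
Proof.
move=> ij ik jk.
have ji : j != i by rewrite eq_sym.
have ki : k != i by rewrite eq_sym.
have kj : k != j by rewrite eq_sym.
have h := hsti i j k ij ik jk (fun _ _ => 1) (fun _ _ => erefl) (fun _ _ => oner_neq0 _).
move: h; rewrite /strict_STI_reps /= !scale1r (angleE ij ik) (angleE ji jk) (angleE ki kj).
case=> h1 h2 h3 h4.
have hc := unit_id _ _ (Hun ki) (Hun kj).
apply: (@trig_core R _ _ _ _ _ _ _ _ h1 h2 h3 h4).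
- exact: unit_id _ _ (Hun ij) (Hun ik).
- exact: unit_id _ _ (Hun ji) (Hun jk).
- by apply/andP; split; nra.
Qed.

Lemma tt_lt1 (hsti : forall i j k : 'I_N, i != j -> i != k -> j != k ->
    strict_STI v i j k) i j k : i != j -> i != k -> j != k ->
  ttv R N un i j k ^+ 2 < 1.
Proof.
move=> ij ik jk.
have ji : j != i by rewrite eq_sym.
have [d1 hlt] := sti_core hsti i j k ij ik jk.
have [d2 _] := sti_core hsti j i k ji jk ik.
have P0 : det2 (un i j) (un i k) * det2 (un j i) (un j k) != 0 by rewrite mulf_neq0.
have P2 : 0 < (det2 (un i j) (un i k) * det2 (un j i) (un j k)) ^+ 2.
  by rewrite lt0r sqr_ge0 andbT sqrf_eq0.
by rewrite /ttv expr_div_n ltr_pdivrMr // mul1r.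
Qed.

Lemma tt_eq (hL : forall i j k m : 'I_N, i != j -> i != k -> i != m ->
    j != k -> j != m -> k != m -> L v i j k m = 0)
  (hd : forall i j k : 'I_N, i != j -> i != k -> j != k -> det2 (un i j) (un i k) != 0)
  i j k m : i != j -> i != k -> i != m -> j != k -> j != m -> k != m ->
  ttv R N un i j k = ttv R N un i j m.
Proof.
move=> ij ik im jk jm km.
have ji : j != i by rewrite eq_sym.
have h := hL i j k m ij ik im jk jm km.
set ak := dot2 (un i j) (un i k); set a'k := det2 (un i j) (un i k).
set bk := dot2 (un j i) (un j k); set b'k := det2 (un j i) (un j k).
set am := dot2 (un i j) (un i m); set a'm := det2 (un i j) (un i m).
set bm := dot2 (un j i) (un j m); set b'm := det2 (un j i) (un j m).
set ck := dot2 (un k i) (un k j); set cm := dot2 (un m i) (un m j).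
have e : L v i j k m = (ck - ak * bk) * `|a'm * b'm|
   - Num.sg (a'k * a'm * b'k * b'm) * (cm - am * bm) * `|a'k * b'k| by [].
rewrite e in h.
have P0 : a'k * b'k != 0 by rewrite mulf_neq0 // ?hd.
have Q0 : a'm * b'm != 0 by rewrite mulf_neq0 // ?hd.
have eP : a'k * a'm * b'k * b'm = (a'k * b'k) * (a'm * b'm) by ring.
rewrite eP in h.
move: h; rewrite sgrM !normrEsg.
set P := a'k * b'k; set Q := a'm * b'm.
have sP : Num.sg P ^+ 2 = 1 by rewrite sqr_sg P0.
move=> h.
have : Num.sg Q * ((ck - ak * bk) * Q - (cm - am * bm) * P) = 0.
  rewrite -h; transitivity (Num.sg Q * ((ck - ak * bk) * Q)
     - Num.sg P ^+ 2 * Num.sg Q * (cm - am * bm) * P); first by rewrite sP; ring.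
  by ring.
move/eqP; rewrite mulf_eq0 sgr_eq0 (negbTE Q0) /= subr_eq0 => /eqP h2.
rewrite /ttv -/ak -/a'k -/bk -/b'k -/am -/a'm -/bm -/b'm -/ck -/cm -/P -/Q.
apply/eqP; rewrite eqr_div //; apply/eqP; rewrite h2; ring.
Qed.

End Hyps.
Arguments un {R N} v p q.
Arguments Hun {R N v} hcl {p q}.
Arguments sti_core {R N v} hcl hsti i j k.
Arguments tt_lt1 {R N v} hcl hsti i j k.
Arguments tt_eq {R N v} hL hd i j k m.
Arguments vE {R N v} hcl {p q}.
Arguments nsym {R N v} hcl {p q}.
Arguments norm_gt0 {R N v} hcl {p q}.

Lemma vecOf_toRowV (R : realType) (y : V R) : vecOf (toRowV y) = y.
Proof. by rewrite /vecOf !mxE /compV /=; case: y. Qed.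

Lemma iotaZ (R : realType) (M : 'M[R]_(2,3)) (k : R) w :
  Defs.iota M (k *: w) = k *: Defs.iota M w.
Proof. by rewrite /Defs.iota scalemxAl. Qed.

Theorem theorem1 (R : realType) (N : nat) (v : 'I_N -> 'I_N -> 'rV[R]_2) :
  (3 <= N)%N ->
  common_lines_data v ->
  (forall i j k : 'I_N, i != j -> i != k -> j != k -> strict_STI v i j k) ->
  (forall i j k m : 'I_N, i != j -> i != k -> i != m -> j != k -> j != m ->
     k != m -> L v i j k m = 0) ->
  (exists F : 'I_N -> 'M[R]_(2,3),
      (forall i, is_frame (F i)) /\ generic F /\ realizes F v) /\
  (forall F G : 'I_N -> 'M[R]_(2,3),
      (forall i, is_frame (F i)) -> generic F -> realizes F v ->
      (forall i, is_frame (G i)) -> generic G -> realizes G v ->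
      exists A : 'M[R]_3, is_orthogonal3 A /\ forall i, G i = act A (F i)).
Proof.
move=> hN hcl hsti hL.
set u := un v.
have Hu : forall p q, p != q -> dot2 (u p q) (u p q) = 1 by move=> p q; exact: Hun.
have Hd : forall i j k : 'I_N, i != j -> i != k -> j != k -> det2 (u i j) (u i k) != 0.
  by move=> i j k ij ik jk; have [] := sti_core hcl hsti i j k ij ik jk.
have Ht : forall i j k : 'I_N, i != j -> i != k -> j != k -> ttv R N u i j k ^+ 2 < 1.
  by move=> i j k ij ik jk; exact: tt_lt1 hcl hsti i j k ij ik jk.
have HL : forall i j k m : 'I_N, i != j -> i != k -> i != m -> j != k -> j != m ->
    k != m -> ttv R N u i j k = ttv R N u i j m.
  by move=> i j k m; exact: tt_eq hL Hd i j k m.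
have h0 : (0 < N)%N by apply: leq_trans hN.
have h1 : (1 < N)%N by apply: leq_trans hN.
have h2 : (2 < N)%N by apply: leq_trans hN.
set i0 := Ordinal h0; set i1 := Ordinal h1; set i2 := Ordinal h2.
have n01 : i0 != i1 by [].
have n02 : i0 != i2 by [].
have n12 : i1 != i2 by [].
have e : forall M p q, p != q ->
    Defs.iota M (v p q) = norm2 (v p q) *: toRowV (emb (frOf M) (u p q)).
  by move=> M p q pq; rewrite -iotaE -iotaZ; congr Defs.iota; exact: vE.
have rtrans : forall F : 'I_N -> 'M[R]_(2,3), realizes F v -> forall i j, i != j ->
    emb (frOf (F i)) (u i j) = emb (frOf (F j)) (u j i).
  move=> F rF i j ij; have ji : j != i by rewrite eq_sym.
  have := rF i j ij; rewrite !e // (nsym hcl ij).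
  by move/(scalerI (lt0r_neq0 (norm_gt0 hcl ji)))/toRowV_inj.
have fr_rz : forall F : 'I_N -> 'M[R]_(2,3), (forall i, is_frame (F i)) ->
    realizes F v -> rzall R N u (fun p => frOf (F p)).
  by move=> F HF rF; split; [move=> p; apply/frameE | exact: rtrans].
split.
  set Fa := Fam R N u i0 i1 i2.
  have RFa : rzall R N u Fa.
    by split; [exact: (Hfam _ _ _ Hu Hd Ht HL _ _ _ n01 n02 n12) | exact: (rz_fam _ _ _ Hu Hd Ht HL _ _ _ n01 n02 n12)].
  have [HFa rFa] := RFa.
  exists (fun p => toM (Fa p)); split; [|split].
  - by move=> p; apply/frameE; rewrite frOfK.
  - split.
    + move=> i j ij; apply/negP => /andP[_ sji].
      have [r1 r2] := rows_perp _ _ sji.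
      rewrite !frOfK in r1 r2.
      have e0 : rowV (toM (Fa j)) 0 = (Fa j).1 by rewrite -[RHS](congr1 fst (frOfK (Fa j))).
      have e1 : rowV (toM (Fa j)) 1 = (Fa j).2 by rewrite -[RHS](congr1 snd (frOfK (Fa j))).
      rewrite e0 in r1; rewrite e1 in r2.
      exact: (planes_ne _ _ _ Hu Hd Ht _ _ _ n01 n02 n12 _ _ _ RFa ij (conj r1 r2)).
    + move=> i j k l ij kl hne; apply/negP => /andP[s1 _].
      set x := u i j *m toM (Fa i).
      have ex : x = toRowV (emb (Fa i) (u i j)) by rewrite /x -[X in emb X](frOfK (Fa i)) -iotaE.
      have xi : (x <= toM (Fa i))%MS by exact: submxMl.
      have xj : (x <= toM (Fa j))%MS.
        have -> : x = u j i *m toM (Fa j).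
          by rewrite ex (rFa _ _ ij) -{1}(frOfK (Fa j)) -iotaE.
        exact: submxMl.
      have xc : (x <= toM (Fa i) :&: toM (Fa j))%MS by rewrite sub_capmx xi xj.
      have xkl := submx_trans xc s1.
      have xk : (x <= toM (Fa k))%MS := submx_trans xkl (capmxSl _ _).
      have xl : (x <= toM (Fa l))%MS := submx_trans xkl (capmxSr _ _).
      have perp : forall m, (x <= toM (Fa m))%MS -> dotV (emb (Fa i) (u i j)) (nF (Fa m)) = 0.
        by move=> m /sub_perp; rewrite ex vecOf_toRowV frOfK.
      have contra : forall m, m != i -> m != j -> (x <= toM (Fa m))%MS -> False.
        move=> m mi mj xm; have := nip _ _ _ Hu Hd Ht _ _ _ n01 n02 n12 _ _ _ m RFa ij.
        rewrite eq_sym in mi; rewrite eq_sym in mj.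
        by move=> /(_ mi mj) /eqP; apply; exact: perp.
      case: (boolP ((k != i) && (k != j))) => [/andP[ki kj]|nk]; first exact: (contra k ki kj xk).
      case: (boolP ((l != i) && (l != j))) => [/andP[li lj]|nl]; first exact: (contra l li lj xl).
      move: nk nl; rewrite !negb_and !negbK => /orP[/eqP ki|/eqP kj] /orP[/eqP li|/eqP lj].
      * by move: kl; rewrite ki li eqxx.
      * by apply: hne; left; rewrite ki lj.
      * by apply: hne; right; rewrite kj li.
      * by move: kl; rewrite kj lj eqxx.
  - move=> i j ij; have ji : j != i by rewrite eq_sym.
    by rewrite !e // (nsym hcl ij) !frOfK rFa.
move=> F G HF _ rF HG _ rG.
have RF := fr_rz F HF rF; have RG := fr_rz G HG rG.
set F' := (fun p => frOf (F p)) in RF.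
set G' := (fun p => frOf (G p)) in RG.
pose xg := xG R N u i0 i1 F'; pose yg := YG R N u i0 i1 F'; pose ng := nG R N i0 F'.
pose xh := xH R N u i0 i1 G'; pose yh := YH R N u i0 i1 G'; pose nh := nH R N i0 G'.
pose ep := eps R N u i0 i1 F' G'.
exists (\matrix_(l < 3, m < 3) (compV xh l * compV xg m + compV yh l * compV yg m
          + ep * compV nh l * compV ng m)); split.
  have [[hxx hyy hxy] enh] := basH _ _ _ Hu _ _ n01 _ RG.
  have [bg eng] := basG _ _ _ Hu _ _ n01 _ RF.
  rewrite /= -/xh -/yh -/nh in hxx hyy hxy enh.
  rewrite -/xg -/yg -/ng in bg eng.
  have hnn : dotV nh nh = 1 by rewrite -enh nn1 //.
  have hxn : dotV xh nh = 0 by rewrite -enh /nF /dotV /crossV /=; ring.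
  have hyn : dotV yh nh = 0 by rewrite -enh /nF /dotV /crossV /=; ring.
  have he : ep ^+ 2 = 1 by rewrite /ep /eps; case: ifP => _; ring.
  rewrite /is_orthogonal3; apply/matrixP => p q; rewrite !mxE sum3 !mxE.
  transitivity (compV xg p * compV xg q * dotV xh xh + compV yg p * compV yg q * dotV yh yh
    + ep ^+ 2 * compV ng p * compV ng q * dotV nh nh
    + (compV xg p * compV yg q + compV yg p * compV xg q) * dotV xh yh
    + ep * (compV xg p * compV ng q + compV ng p * compV xg q) * dotV xh nh
    + ep * (compV yg p * compV ng q + compV ng p * compV yg q) * dotV yh nh).
    by rewrite /dotV /compV /=; ring.
  rewrite hxx hyy hnn hxy hxn hyn he.
  have C := complete (xg, yg) bg p q; rewrite eng in C.
  transitivity (compV xg p * compV xg q + compV yg p * compV yg q + compV ng p * compV ng q).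
    by ring.
  exact: C.
move=> p.
have E := Lfr _ _ _ Hu Hd _ _ _ n01 n02 n12 F' G' RF RG p.
rewrite -(toMK (G p)); change (frOf (G p)) with (G' p); rewrite E.
apply/matrixP => r l; rewrite /act !mxE sum3 !mxE.
by case: (ord2 r) => ->; case: (ord3 l) => [->|[->|->]];
  rewrite /compV /Lmap /F' /frOf /rowV /dotV /= -/xg -/yg -/ng -/xh -/yh -/nh -/ep; ring.
Qed.
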